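(* Let $(X,d)$ be a locally compact metric space and let $\{A_n\}_{n\ge 1}$ be a sequence of closed, connected subsets of $X$ such that $A_1\supseteq A_2\supseteq\cdots$ and $\bigcap_{n=1}^{\infty}A_n$ is a nonempty compact subset of $X$. Then for every neighborhood $U$ of $\bigcap_{n=1}^{\infty}A_n$ there is a natural number $n$ with $A_n\subseteq U$. *)

(* Defs.v *)
From HB Require Import structures.
From mathcomp Require Import all_boot all_order all_algebra.
From mathcomp Require Import all_classical all_reals all_analysis.
Set Implicit Arguments. Unset Strict Implicit. Unset Printing Implicit Defensive.
Import Order.TTheory GRing.Theory Num.Theory.
Local Open Scope classical_set_scope.

(* Main.v *)
Require Import Defs.
From HB Require Import structures.
From mathcomp Require Import all_boot all_order all_algebra.
From mathcomp Require Import all_classical all_reals all_analysis.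
Local Open Scope classical_set_scope.

Lemma decr_sub_aux (T : Type) (A : nat -> set T) :
  (forall n, A n.+1 `<=` A n) -> forall m n, (m <= n)%N -> A n `<=` A m.
Proof.
move=> h m n /subnK <-; elim: (n - m)%N => [|k IH]; first by rewrite add0n.
by rewrite addSn; exact: subset_trans (h _) IH.
Qed.

Lemma compact_nbhd_aux (R : realType) (X : metricType R) (K U : set X) :
  locally_compact [set: X] -> compact K -> set_nbhs K U ->
  exists V, [/\ compact V, closed V, V `<=` U & K `<=` V°].
Proof.
move=> lc cK sU.
pose G := [set T : set X | exists V, [/\ compact V, closed V, V `<=` U & T `<=` V°]].
apply: contrapT => nGK; have {}nGK : ~ G K by [].
pose F := filter_from G (fun T => K `\` T).
have FF : Filter F.
  apply: filter_from_filter.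
    exists set0; exists set0; split => //; [exact: compact0|exact: closed0].
  move=> T1 T2 [V1 [c1 cl1 s1 i1]] [V2 [c2 cl2 s2 i2]].
  exists (T1 `|` T2).
    exists (V1 `|` V2); split; first exact: compactU.
    - exact: closedU.
    - by move=> x [/s1|/s2].
    - by move=> x [/i1|/i2]; apply: interiorS => y; [left|right].
  by move=> x [Kx nT]; split; split => // ?; apply: nT; [left|right].
have PF : ProperFilter F.
  apply: filter_from_proper => // T [V [cV clV sV iV]].
  apply/set0P/negP => /eqP; rewrite setD_eq0 => KT; apply: nGK; exists V; split => //.
  exact: subset_trans iV.
have FK : F K.
  exists set0; last by move=> x [].
  by exists set0; split => //; [exact: compact0|exact: closed0].
have [p [Kp clp]] := cK F PF FK.
have [U0 U0p [cU0 clU0]] := lc p I; rewrite withinET in U0p.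
have Up : nbhs p U by exact: sU.
have [C Cp CU] := @uniform_regular X p U Up.
pose W := U0 `&` closure C.
have cW : compact W.
  apply: (subclosed_compact _ cU0); last by move=> x [].
  by apply: closedI => //; exact: closed_closure.
have clW : closed W by by apply: closedI => //; exact: closed_closure.
have Wp : nbhs p W.
  apply: filterI => //; apply: filterS Cp; exact: subset_closure.
have GW : G W° by exists W; split => //; by move=> x [_ /CU].
have FW : F (K `\` W°) by exists W°.
have [x [[_ nWx] Wx]] := clp _ _ FW (nbhs_interior Wp).
by apply: nWx.
Qed.

Theorem lemma3p2 (R : realType) (X : metricType R) (A : nat -> set X) :
  locally_compact [set: X] ->
  (forall n, closed (A n)) ->
  (forall n, connected (A n)) ->
  (forall n, A n.+1 `<=` A n) ->
  \bigcap_n A n !=set0 ->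
  compact (\bigcap_n A n) ->
  forall U : set X, set_nbhs (\bigcap_n A n) U ->
  exists n, A n `<=` U.
Proof.
move=> lc clA coA decA [k Kk] cK U sU.
have [V [cV clV VU KV]] := @compact_nbhd_aux R X _ U lc cK sU.
apply: contrapT => nex.
pose B n := A n `&` (V `&` ~` V°).
have KA n : \bigcap_n A n `<=` A n by move=> x /(_ n I).
have Bne n : B n !=set0.
  apply: contrapT => Bn.
  have eq : A n `&` V° = A n.
    apply: (coA n); first by exists k; split; [exact: KA|exact: KV].
      by exists V° => //; exact: open_interior.
    exists V => //; apply/seteqP; split => x [Ax Vx]; split => //.
      exact: interior_subset.
    have [//|nVx] := pselect (V° x).
    by exfalso; apply: Bn; exists x.
  apply: nex; exists n => x Ax; apply: VU; apply: interior_subset.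
  by rewrite -eq in Ax; case: Ax.
pose F := filter_from setT B.
have FF : Filter F.
  apply: filter_fromT_filter; first by exists 0%N.
  move=> i j; exists (maxn i j) => x [Ax Sx].
  split; split => //.
    exact: (@decr_sub_aux _ A decA i (maxn i j) (leq_maxl i j) x Ax).
  exact: (@decr_sub_aux _ A decA j (maxn i j) (leq_maxr i j) x Ax).
have PF : ProperFilter F by apply: filter_from_proper.
have cS : compact (V `&` ~` V°).
  by apply: compact_closedI cV _; apply: open_closedC; exact: open_interior.
have FS : F (V `&` ~` V°) by exists 0%N => // x [].
have [p [[Vp nVp] clp]] := cS F PF FS.
apply: nVp; apply: KV => n _; apply: (clA n) => N Np.
have [x [[Ax _] Nx]] := clp _ _ (ex_intro2 _ _ n I (@subset_refl _ (B n))) Np.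
by exists x.
Qed.
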